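(* Let $G$ be a $2$-generated, simple, complete, torsion-free group in which every proper subgroup is infinite cyclic. Then every maximal cyclic subgroup $Z$ of $G$ is malnormal (i.e. $Z\cap g^{-1}Zg=1$ for all $g\in G\setminus Z$), and $G$ has the unique root property.
   Context: A group is complete if it has trivial center and no outer automorphisms. A group has the unique root property if for all $x,y$ in it and every positive integer $n$, $x^n=y^n$ implies $x=y$. *)

(* Defs.v *)
From Stdlib Require Import ZArith.

Record group := Group {
  carrier :> Type;
  mul : carrier -> carrier -> carrier;
  inv : carrier -> carrier;
  one : carrier;
  mulA : forall x y z, mul x (mul y z) = mul (mul x y) z;
  mul1g : forall x, mul one x = x;
  mulVg : forall x, mul (inv x) x = one
}.

Arguments mul {g} _ _.
Arguments inv {g} _.
Arguments one {g}.

Section GroupNotions.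
Variable G : group.

Fixpoint npow (x : G) (n : nat) : G :=
  match n with O => one | S k => mul x (npow x k) end.

Definition zpow (x : G) (n : Z) : G :=
  match n with
  | Z0 => one
  | Zpos p => npow x (Pos.to_nat p)
  | Zneg p => inv (npow x (Pos.to_nat p))
  end.

Definition conj (x g : G) : G := mul (inv g) (mul x g).

Definition subgroup (H : G -> Prop) : Prop :=
  H one /\ (forall x y, H x -> H y -> H (mul x y)) /\ (forall x, H x -> H (inv x)).

Definition set_eq (H K : G -> Prop) : Prop := forall x, H x <-> K x.

Definition trivial_set (H : G -> Prop) : Prop := forall x, H x <-> x = one.

Definition proper (H : G -> Prop) : Prop := exists x, ~ H x.

Definition cyc (a : G) (x : G) : Prop := exists n : Z, x = zpow a n.

Definition generated (S : G -> Prop) (x : G) : Prop :=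
  forall H, subgroup H -> (forall s, S s -> H s) -> H x.

Definition cyclic (H : G -> Prop) : Prop := exists a, set_eq H (cyc a).

Definition infinite_cyclic (H : G -> Prop) : Prop :=
  exists a, set_eq H (cyc a) /\ (forall n : Z, zpow a n = one -> n = 0%Z).

Definition two_generated : Prop :=
  exists a b, forall x, generated (fun s => s = a \/ s = b) x.

Definition normal (N : G -> Prop) : Prop :=
  subgroup N /\ forall x g, N x -> N (conj x g).

Definition simple : Prop :=
  (exists x : G, x <> one) /\
  forall N, normal N -> trivial_set N \/ (forall x, N x).

Definition central (z : G) : Prop := forall x, mul z x = mul x z.

Definition automorphism (f : G -> G) : Prop :=
  (forall x y, f (mul x y) = mul (f x) (f y)) /\
  (forall x y, f x = f y -> x = y) /\ (forall y, exists x, f x = y).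

Definition inner (f : G -> G) : Prop := exists g, forall x, f x = conj x g.

Definition complete : Prop :=
  (forall z, central z -> z = one) /\ (forall f, automorphism f -> inner f).

Definition torsion_free : Prop :=
  forall (x : G) (n : nat), (0 < n)%nat -> npow x n = one -> x = one.

Definition maximal_cyclic (Z : G -> Prop) : Prop :=
  subgroup Z /\ cyclic Z /\
  forall Z', subgroup Z' -> cyclic Z' -> (forall x, Z x -> Z' x) -> set_eq Z' Z.

Definition malnormal (Z : G -> Prop) : Prop :=
  forall g, ~ Z g -> forall x, Z x -> Z (conj x g) -> x = one.

Definition unique_root_property : Prop :=
  forall (x y : G) (n : nat), (0 < n)%nat -> npow x n = npow y n -> x = y.

End GroupNotions.

(* Main.v *)
Require Import Defs.
From Stdlib Require Import ZArith Classical.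

Section L.
Variable G : group.
Implicit Types x y z a g h : G.

Lemma mulgV x : mul x (inv x) = one.
Proof.
  rewrite <- (mul1g G (mul x (inv x))).
  rewrite <- (mulVg G (inv x)) at 1.
  rewrite <- mulA, (mulA G (inv x) x), mulVg, mul1g, mulVg. reflexivity.
Qed.

Lemma mulg1 x : mul x one = x.
Proof. rewrite <- (mulVg G x), mulA, mulgV, mul1g. reflexivity. Qed.

Lemma mulKg a x : mul (inv a) (mul a x) = x.
Proof. rewrite mulA, mulVg, mul1g. reflexivity. Qed.

Lemma lcanc a x y : mul a x = mul a y -> x = y.
Proof. intro H. rewrite <- (mulKg a x), H, mulKg. reflexivity. Qed.

Lemma rcanc a x y : mul x a = mul y a -> x = y.
Proof.
  intro H. rewrite <- (mulg1 x), <- (mulg1 y), <- (mulgV a), !mulA, H.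
  reflexivity.
Qed.

Lemma invK x : inv (inv x) = x.
Proof. apply (lcanc (inv x)). rewrite mulgV, mulVg. reflexivity. Qed.

Lemma invM x y : inv (mul x y) = mul (inv y) (inv x).
Proof.
  apply (lcanc (mul x y)). rewrite mulgV, <- mulA, (mulA G y), mulgV, mul1g, mulgV.
  reflexivity.
Qed.

Lemma conj_mul x y g : conj G (mul x y) g = mul (conj G x g) (conj G y g).
Proof.
  unfold conj. rewrite !mulA. f_equal. rewrite <- !mulA. f_equal. f_equal.
  rewrite (mulA G g), mulgV, mul1g. reflexivity.
Qed.

Lemma conj1 x : conj G x one = x.
Proof.
  unfold conj. assert (inv (@one G) = one) as E.
  { rewrite <- (mul1g G (inv one)). apply mulgV. }
  rewrite E, mul1g, mulg1. reflexivity.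
Qed.

Lemma conjM x g h : conj G x (mul g h) = conj G (conj G x g) h.
Proof. unfold conj. rewrite invM, !mulA. reflexivity. Qed.

Lemma conjV x g : conj G (conj G x g) (inv g) = x.
Proof.
  rewrite <- conjM, mulgV, conj1. reflexivity.
Qed.

Definition comm x y := mul x y = mul y x.

Lemma comm_sym x y : comm x y -> comm y x.
Proof. unfold comm; auto. Qed.

Lemma comm_conj x y g : comm x y -> comm (conj G x g) (conj G y g).
Proof. unfold comm. intro H. rewrite <- !conj_mul, H. reflexivity. Qed.

Lemma comm_inv a y : comm a y -> comm a (inv y).
Proof.
  unfold comm. intro H. apply (lcanc y). rewrite mulA, <- H, <- mulA, mulgV, mulg1,
   mulA, mulgV, mul1g. reflexivity.
Qed.

Lemma comm_mul a y z : comm a y -> comm a z -> comm a (mul y z).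
Proof.
  unfold comm. intros H1 H2. rewrite mulA, H1, <- mulA, H2, mulA. reflexivity.
Qed.

Lemma comm_one a : comm a one.
Proof. unfold comm. rewrite mulg1, mul1g. reflexivity. Qed.

Lemma comm_npow a y n : comm a y -> comm a (npow G y n).
Proof.
  intro H. induction n; simpl. apply comm_one. apply comm_mul; auto.
Qed.

Lemma comm_zpow y a i : comm y a -> comm y (zpow G a i).
Proof.
  intro H. destruct i; simpl. apply comm_one. apply comm_npow; auto.
  apply comm_inv, comm_npow; auto.
Qed.

Lemma comm_refl a : comm a a.
Proof. reflexivity. Qed.

Lemma comm_zpow2 a i j : comm (zpow G a i) (zpow G a j).
Proof.
  apply comm_zpow, comm_sym, comm_zpow, comm_refl.
Qed.

Lemma npow_mul x y n : comm x y -> npow G (mul x y) n = mul (npow G x n) (npow G y n).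
Proof.
  intro H. induction n; simpl. rewrite mulg1; reflexivity.
  rewrite IHn. rewrite <- !mulA. f_equal. rewrite !mulA. f_equal.
  first [change (comm y (npow G x n)) | symmetry; change (comm y (npow G x n))]; apply comm_npow, comm_sym; auto.
Qed.

Definition C y := fun z => comm z y.

Lemma C_sub y : subgroup G (C y).
Proof.
  unfold C. split; [|split].
  - apply comm_sym, comm_one.
  - intros a b Ha Hb. apply comm_sym, comm_mul; apply comm_sym; auto.
  - intros a Ha. apply comm_sym, comm_inv, comm_sym; auto.
Qed.

Lemma cyclic_comm H : cyclic G H -> forall u v, H u -> H v -> comm u v.
Proof.
  intros [c Hc] u v Hu Hv. apply Hc in Hu. apply Hc in Hv.
  destruct Hu as [i ->]. destruct Hv as [j ->]. apply comm_zpow2.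
Qed.

Hypothesis cmpl : complete G.
Hypothesis Hsub : forall H : G -> Prop, subgroup G H -> proper G H -> ~ trivial_set G H ->
     infinite_cyclic G H.

Lemma C_cyclic y : y <> one -> cyclic G (C y).
Proof.
  intro Hy. destruct (Hsub (C y)) as [c [Hc _]].
  - apply C_sub.
  - apply NNPP. intro Hn. apply Hy. apply (proj1 cmpl). intro x.
    apply NNPP. intro Hx. apply Hn. exists x. intro Hx'. apply Hx.
    apply comm_sym in Hx'. exact Hx'.
  - intro T. apply Hy. apply T. apply comm_refl.
  - exists c; auto.
Qed.

Lemma maxZ_C Z y : maximal_cyclic G Z -> Z y -> y <> one -> set_eq G (C y) Z.
Proof.
  intros [HZs [HZc HZm]] Zy Hy. apply HZm. apply C_sub. apply C_cyclic; auto.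
  intros z Zz. apply (cyclic_comm Z); auto.
Qed.

End L.

Theorem lemma5p3 (G : group) :
  two_generated G -> simple G -> complete G -> torsion_free G ->
  (forall H : G -> Prop, subgroup G H -> proper G H -> ~ trivial_set G H ->
     infinite_cyclic G H) ->
  (forall Z : G -> Prop, maximal_cyclic G Z -> malnormal G Z) /\
  unique_root_property G.
Proof.
  intros _ Hsimp Hcmpl Htf Hsub. split.
  - intros Z HZ g Hg x Zx Zxg.
    apply NNPP. intro Hx.
    assert (Hxg : conj G x g <> one).
    { intro E. apply Hx. rewrite <- (conjV G x g), E. unfold conj.
      rewrite mul1g, invK, mulgV. reflexivity. }
    pose proof (maxZ_C G Hcmpl Hsub Z x HZ Zx Hx) as E1.
    pose proof (maxZ_C G Hcmpl Hsub Z _ HZ Zxg Hxg) as E2.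
    destruct HZ as [HZs [HZc HZm]].
    set (N := fun h => (forall z, Z z -> Z (conj G z h)) /\
                       (forall z, Z z -> Z (conj G z (inv h)))).
    assert (NS : subgroup G N).
    { split; [|split].
      - split; intros z Zz.
        + rewrite conj1; auto.
        + assert (inv (@one G) = one) as E.
          { rewrite <- (mul1g G (inv one)). apply mulgV. }
          rewrite E, conj1; auto.
      - intros a b [Ha1 Ha2] [Hb1 Hb2]. split; intros z Zz.
        + rewrite conjM; auto.
        + rewrite invM, conjM; auto.
      - intros a [Ha1 Ha2]. split; intros z Zz; auto. rewrite invK; auto. }
    assert (Ng : N g).
    { split; intros z Zz.
      - apply E2. apply comm_conj. apply E1. auto.
      - apply E1. rewrite <- (conjV G x g). apply comm_conj. apply E2. auto. }
    assert (ZN : forall z, Z z -> N z).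
    { intros z Zz. destruct HZs as [H1 [H2 H3]]. split; intros w Zw; unfold conj; auto. }
    destruct (classic (forall h, N h)) as [Hall | Hnall].
    + destruct (proj2 Hsimp Z) as [T | T].
      * split; auto. intros w h Zw. apply (Hall h). auto.
      * apply Hx. apply T. auto.
      * apply Hg. auto.
    + destruct (Hsub N NS) as [c [Hc _]].
      * apply NNPP. intro Hn. apply Hnall. intro h. apply NNPP. intro Hh.
        apply Hn. exists h. auto.
      * intro T. apply Hx. apply T. auto.
      * apply Hg. apply (HZm N NS). exists c; auto. auto. auto.
  - intros x y n Hn Exy.
    destruct (classic (npow G x n = one)) as [E | E].
    + rewrite (Htf x n Hn E). symmetry. apply (Htf y n Hn). congruence.
    + set (w := npow G x n).
      assert (Cx : comm G x w) by (apply comm_npow, comm_refl).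
      assert (Cy : comm G y w) by (unfold w; rewrite Exy; apply comm_npow, comm_refl).
      assert (Cxy : comm G x y).
      { apply (cyclic_comm G (C G w)). apply (C_cyclic G Hcmpl Hsub). exact E.
        exact Cx. exact Cy. }
      set (u := mul x (inv y)).
      assert (Cuy : comm G u y).
      { apply comm_sym. apply comm_mul. apply comm_sym; auto. apply comm_inv, comm_refl. }
      assert (Hu : npow G u n = one).
      { apply (rcanc G (npow G y n)). rewrite <- npow_mul by exact Cuy.
        unfold u. rewrite <- mulA, mulVg, mulg1, mul1g. auto. }
      pose proof (Htf u n Hn Hu) as U. unfold u in U.
      apply (rcanc G (inv y)). rewrite U, mulgV. reflexivity.
Qed.
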